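(* Let $d \ge 2$. Let $\rho_T$ be a density matrix on $\mathbb{C}^2$ with eigenvalues, sorted in decreasing order, $\{\alpha, 1-\alpha\}$, and let $\rho_A$ be a density matrix on $\mathbb{C}^d$ with eigenvalues, sorted in decreasing order, $\{\beta_1, \beta_2, \dots, \beta_d\}$. Consider the joint state $\rho_{T,A} = \rho_T \otimes \rho_A$ on $\mathbb{C}^2 \otimes \mathbb{C}^d$ and, for a unitary $U$ on $\mathbb{C}^2\otimes\mathbb{C}^d$, the purification channel $\mathcal{E}_U(\rho_{T,A}) = \mathrm{Tr}_A\!\left(U \rho_{T,A} U^\dagger\right)$. Then among all unitaries $U$ on $\mathbb{C}^2\otimes\mathbb{C}^d$, a unitary maximizing the largest eigenvalue of the output target state $\mathcal{E}_U(\rho_{T,A})$ can always be chosen to be a permutation matrix with respect to a product eigenbasis $\{|a\rangle_T|b\rangle_A\}$ of $\rho_T\otimes\rho_A$ (where $\{|a\rangle_T\}$ and $\{|b\rangle_A\}$ are eigenbases of $\rho_T$ and $\rho_A$).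
   Context: $\mathrm{Tr}_A$ denotes the partial trace over the auxiliary system $\mathbb{C}^d$. The purity of the output target qubit is measured by its largest eigenvalue (equivalently by its polarization $\epsilon$, where a diagonal qubit state with eigenvalues $\frac{e^{\epsilon}}{e^\epsilon+e^{-\epsilon}}, \frac{e^{-\epsilon}}{e^\epsilon+e^{-\epsilon}}$ has polarization $\epsilon$); ''optimal'' means maximizing this purity. *)

(* Defs.v *)
From mathcomp Require Import all_boot all_order all_algebra.
From mathcomp Require Import fingroup perm spectral mxtens.
Set Implicit Arguments. Unset Strict Implicit. Unset Printing Implicit Defensive.
Import Order.TTheory GRing.Theory Num.Theory.
Local Open Scope ring_scope.
Local Open Scope sesquilinear_scope.

Definition adjmx (C : numClosedFieldType) m n (A : 'M[C]_(m, n)) : 'M[C]_(n, m) :=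
  A ^t*.

Definition unitaryP (C : numClosedFieldType) n (U : 'M[C]_n) : Prop :=
  U \is unitarymx.

Definition is_density (C : numClosedFieldType) n (rho : 'M[C]_n) : Prop :=
  [/\ adjmx rho = rho,
      (forall v : 'rV[C]_n, 0 <= (v *m rho *m adjmx v) 0 0)
    & \tr rho = 1].

Definition is_eigenbasis (C : numClosedFieldType) n (rho V : 'M[C]_n)
  (lam : 'rV[C]_n) : Prop :=
  unitaryP V /\ rho = V *m diag_mx lam *m adjmx V.

Definition ptrace2 (C : numClosedFieldType) m n (M : 'M[C]_(m * n)) : 'M[C]_m :=
  \matrix_(i, j) \sum_(b < n) M (mxtens_index (i, b)) (mxtens_index (j, b)).

Definition purif_channel (C : numClosedFieldType) d (U rho : 'M[C]_(2 * d)) : 'M[C]_2 :=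
  ptrace2 (U *m rho *m adjmx U).

(* Main.v *)
Require Import Defs.
From mathcomp Require Import all_boot all_order all_algebra.
From mathcomp Require Import fingroup perm spectral mxtens.
From mathcomp Require Import ring.
Import Order.TTheory GRing.Theory Num.Theory.
Local Open Scope ring_scope.
Local Open Scope sesquilinear_scope.
Set Implicit Arguments. Unset Strict Implicit.

Lemma sum_tens (C : numClosedFieldType) m n (F : 'I_(m * n) -> C) :
  \sum_k F k = \sum_(i < m) \sum_(j < n) F (mxtens_index (i, j)).
Proof.
rewrite pair_big /=.
rewrite (reindex (@mxtens_index m n)) /=; last first.
  by exists (@mxtens_unindex m n) => x _; [apply: mxtens_indexK | apply: mxtens_unindexK].
by apply: eq_bigr => -[i j].
Qed.

Lemma cs2 (C : numClosedFieldType) (v0 v1 x0 x1 : C) :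
  (v0 * x0 + v1 * x1) * (v0 * x0 + v1 * x1)^* <=
  (v0 * v0^* + v1 * v1^*) * (x0 * x0^* + x1 * x1^*).
Proof.
rewrite -subr_ge0.
have -> : (v0 * v0^* + v1 * v1^*) * (x0 * x0^* + x1 * x1^*) -
   (v0 * x0 + v1 * x1) * (v0 * x0 + v1 * x1)^* =
   (v0^* * x1 - v1^* * x0) * (v0^* * x1 - v1^* * x0)^*.
  rewrite !rmorphB !rmorphD !rmorphM /= !conjCK; ring.
exact: mul_conjC_ge0.
Qed.

Lemma sort_perm_exists (C : numClosedFieldType) n (x0 : 'I_n) (f : 'I_n -> C) :
  (forall i, f i \is Num.real) ->
  exists s : 'S_n, forall i j : 'I_n, (i <= j)%N -> f (s j) <= f (s i).
Proof.
move=> freal.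
pose r := fun i j : 'I_n => f j <= f i.
pose s0 := sort r (enum 'I_n).
have rtot : total r by move=> i j; rewrite /r real_leVge.
have rtr : transitive r by move=> i j k /= hji hkj; rewrite /r (le_trans hkj hji).
have rrf : reflexive r by move=> i; rewrite /r.
have ss0 : size s0 = n by rewrite size_sort size_enum_ord.
have us0 : uniq s0 by rewrite sort_uniq enum_uniq.
have srt : sorted r s0 by apply: sort_sorted.
pose g := fun i : 'I_n => nth x0 s0 i.
have ginj : injective g.
  move=> i j /eqP; rewrite /g nth_uniq ?ss0 // => /eqP; apply: val_inj.
exists (perm ginj) => i j hij; rewrite !permE.
by apply: (sorted_leq_nth rtr rrf x0 srt) => //; rewrite inE ss0.
Qed.

Lemma adjmxM (C : numClosedFieldType) m n p (A : 'M[C]_(m, n)) (B : 'M[C]_(n, p)) :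
  adjmx (A *m B) = adjmx B *m adjmx A.
Proof. by rewrite /adjmx trmx_mul map_mxM. Qed.

Lemma adjmxK (C : numClosedFieldType) m n (A : 'M[C]_(m, n)) : adjmx (adjmx A) = A.
Proof. exact: trmxCK. Qed.

Lemma unitary_l (C : numClosedFieldType) n (U : 'M[C]_n) :
  U \is unitarymx -> U^t* *m U = 1%:M.
Proof.
move=> hU; have : U^t* \is unitarymx by rewrite trmxC_unitary.
by move/unitarymxP; rewrite trmxCK.
Qed.

Lemma eigbasis_of (C : numClosedFieldType) n (rho : 'M[C]_n) :
  adjmx rho = rho -> is_eigenbasis rho ((spectralmx rho)^t*) (spectral_diag rho).
Proof.
move=> hr; split; first by rewrite /unitaryP trmxC_unitary spectral_unitarymx.
have hn : rho \is normalmx by apply/normalmxP; move: hr; rewrite /adjmx => ->.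
rewrite /adjmx trmxCK -invmx_unitary ?spectral_unitarymx //.
exact/orthomx_spectralP.
Qed.

Lemma eig_ge0 (C : numClosedFieldType) n (rho V : 'M[C]_n) lam :
  is_density rho -> is_eigenbasis rho V lam -> forall i, 0 <= lam 0 i.
Proof.
move=> [_ hpos _] [hV hr] i.
have := hpos (delta_mx 0 i *m adjmx V).
rewrite hr adjmxM adjmxK.
have VV : adjmx V *m V = 1%:M by apply: unitary_l.
rewrite !mulmxA -(mulmxA _ (adjmx V) V) VV mulmx1.
rewrite -!mulmxA (mulmxA (adjmx V)) VV mul1mx.
have -> : adjmx (delta_mx 0 i : 'rV[C]_n) = delta_mx i 0.
  by apply/matrixP=> a b; rewrite /adjmx !mxE rmorph_nat eq_sym andbC.
by rewrite mulmxA -rowE row_diag_mx -scalemxAl mul_delta_mx !mxE !eqxx mulr1.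
Qed.

Lemma quadE (C : numClosedFieldType) n (v u : 'rV[C]_n) (M : 'M[C]_n) :
  (v *m M *m u^t*) 0 0 = \sum_i \sum_j v 0 i * M i j * (u 0 j)^*.
Proof.
rewrite !mxE exchange_big /=; apply: eq_bigr => j _.
rewrite !mxE mulr_suml; apply: eq_bigr => i _.
by [].
Qed.

Lemma norm_pos (C : numClosedFieldType) n (v : 'rV[C]_n) :
  v != 0 -> 0 < \sum_i v 0 i * (v 0 i)^*.
Proof.
move=> vn0; rewrite lt_def sumr_ge0 ?andbT; last by move=> i _; apply: mul_conjC_ge0.
apply: contra vn0 => /eqP h; apply/eqP/rowP => i; rewrite mxE.
have := psumr_eq0P (fun i _ => mul_conjC_ge0 (v 0 i)) h (i := i) isT.
by move/eqP; rewrite mul_conjC_eq0 => /eqP.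
Qed.

Lemma idx_eq m n (i j : 'I_m) (b c : 'I_n) :
  (mxtens_index (i, b) == mxtens_index (j, c)) = (i == j) && (b == c).
Proof.
apply/eqP/andP => [h|[/eqP -> /eqP ->] //].
have := congr1 (@mxtens_unindex m n) h; rewrite !mxtens_indexK => -[-> ->].
by [].
Qed.

Lemma prod_conj (C : numClosedFieldType) (I : finType) (a : I -> C) :
  (\sum_i a i) * (\sum_j a j)^* = \sum_i \sum_j a i * (a j)^*.
Proof.
rewrite rmorph_sum mulr_suml; apply: eq_bigr => i _.
by rewrite mulr_sumr.
Qed.

Lemma swap4 (C : numClosedFieldType) (I J B K : finType) (F : I -> J -> B -> K -> C) :
  \sum_i \sum_j \sum_b \sum_k F i j b k = \sum_k \sum_b \sum_i \sum_j F i j b k.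
Proof.
transitivity (\sum_i \sum_j \sum_k \sum_b F i j b k).
  by apply: eq_bigr => i _; apply: eq_bigr => j _; rewrite exchange_big.
transitivity (\sum_i \sum_k \sum_j \sum_b F i j b k).
  by apply: eq_bigr => i _; rewrite exchange_big.
rewrite exchange_big /=.
transitivity (\sum_k \sum_i \sum_b \sum_j F i j b k).
  by apply: eq_bigr => k _; apply: eq_bigr => i _; rewrite exchange_big.
by apply: eq_bigr => k _; rewrite exchange_big.
Qed.

Lemma key_bound (C : numClosedFieldType) d (X : 'M[C]_(2 * d)) (mu : 'I_(2 * d) -> C)
  (s : 'S_(2 * d)) (j0 : 'I_(2 * d)) :
  X \is unitarymx -> (forall k, 0 <= mu k) ->
  (forall i j : 'I_(2 * d), (i <= j)%N -> mu (s j) <= mu (s i)) ->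
  val j0 = d.-1 ->
  forall l, eigenvalue (ptrace2 (X *m diag_mx (\row_k mu k) *m X^t*)) l ->
  l <= \sum_(c < d) mu (s (mxtens_index (ord0, c))).
Proof.
move=> hX mu0 hs hj0 l /eigenvalueP [v hv vn0].
pose N := \sum_i v 0 i * (v 0 i)^*.
have Npos : 0 < N by apply: norm_pos.
pose y := fun (b : 'I_d) (k : 'I_(2 * d)) => \sum_i v 0 i * X (mxtens_index (i, b)) k.
pose w := fun k => \sum_b y b k * (y b k)^*.
have stepA : l * N = \sum_k mu k * w k.
  pose Q := X *m diag_mx (\row_k mu k) *m X^t*.
  have Qe : forall p q, Q p q = \sum_k X p k * mu k * (X q k)^*.
    by move=> p q; rewrite /Q mul_mx_diag !mxE; apply: eq_bigr => k _; rewrite !mxE.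
  have e1 : (v *m ptrace2 Q *m v^t*) 0 0 = l * N.
    rewrite hv -scalemxAl mxE /N; congr (_ * _); rewrite mxE.
    by apply: eq_bigr => i _; rewrite !mxE.
  rewrite -e1 quadE.
  transitivity (\sum_i \sum_j \sum_b \sum_k
     mu k * (v 0 i * X (mxtens_index (i, b)) k) * (v 0 j * X (mxtens_index (j, b)) k)^*).
    apply: eq_bigr => i _; apply: eq_bigr => j _.
    rewrite mxE mulr_sumr mulr_suml; apply: eq_bigr => b _.
    rewrite Qe mulr_sumr mulr_suml; apply: eq_bigr => k _.
    by rewrite rmorphM; ring.
  rewrite swap4; apply: eq_bigr => k _.
  rewrite /w /y mulr_sumr; apply: eq_bigr => b _.
  rewrite prod_conj mulr_sumr; apply: eq_bigr => i _.
  by rewrite mulr_sumr; apply: eq_bigr => j _; rewrite mulrA.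
have w0 : forall k, 0 <= w k.
  by move=> k; apply: sumr_ge0 => b _; apply: mul_conjC_ge0.
have wN : forall k, w k <= N.
  move=> k; apply: (@le_trans _ _ (\sum_b N * \sum_(i < 2) X (mxtens_index (i, b)) k * (X (mxtens_index (i, b)) k)^*)).
    apply: ler_sum => b _; rewrite /y /N !big_ord_recl !big_ord0 !addr0; exact: cs2.
  rewrite -mulr_sumr.
  have -> : \sum_b \sum_(i < 2) X (mxtens_index (i, b)) k * (X (mxtens_index (i, b)) k)^* = 1.
    rewrite exchange_big /= -(@sum_tens _ 2 d (fun r => X r k * (X r k)^*)).
    have := @unitary_l _ _ X hX; move/matrixP/(_ k k); rewrite !mxE eqxx /= => h.
    apply: (etrans _ h); by apply: eq_bigr => r _; rewrite !mxE mulrC.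
  by rewrite mulr1.
have XX : X *m X^t* = 1%:M by apply/unitarymxP.
have wsum : \sum_k w k = d%:R * N.
  rewrite /w exchange_big /=.
  have hb : forall b, \sum_k y b k * (y b k)^* = N.
    move=> b; rewrite /y.
    transitivity (\sum_k \sum_i \sum_j (v 0 i * X (mxtens_index (i, b)) k) * (v 0 j * X (mxtens_index (j, b)) k)^*).
      by apply: eq_bigr => k _; rewrite prod_conj.
    rewrite exchange_big /=.
    transitivity (\sum_i \sum_j v 0 i * (v 0 j)^* * ((i == j)%:R)).
      apply: eq_bigr => i _; rewrite exchange_big /=; apply: eq_bigr => j _.
      have := XX; move/matrixP/(_ (mxtens_index (i, b)) (mxtens_index (j, b))).
      rewrite !mxE idx_eq eqxx andbT => h.
      apply: (etrans _ (congr1 (fun z => v 0 i * (v 0 j)^* * z) h)).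
      rewrite mulr_sumr; apply: eq_bigr => k _.
      rewrite [(X^t*) _ _]mxE [(X^T) _ _]mxE rmorphM.
      exact: mulrACA.
    rewrite /N; apply: eq_bigr => i _; rewrite (bigD1 i) // eqxx mulr1 big1; first exact: addr0.
    by move=> j /andP[_ /negPf hj]; rewrite eq_sym hj mulr0.
  rewrite (eq_bigr (fun _ => N)); last by move=> b _; apply: hb.
  by rewrite sumr_const card_ord mulr_natl.
rewrite -(ler_pM2r Npos) stepA (reindex_inj (@perm_inj _ s)) /=.
pose m0 := mu (s j0).
pose c (j : 'I_(2 * d)) : C := ((val j < d)%N)%:R.
have term : forall j, mu (s j) * w (s j) <= mu (s j) * N * c j + m0 * (w (s j) - N * c j).
  move=> j; rewrite /c; case: ltnP => hj.
    rewrite -subr_ge0.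
    have -> : mu (s j) * N * 1 + m0 * (w (s j) - N * 1) - mu (s j) * w (s j) =
              (mu (s j) - m0) * (N - w (s j)) by ring.
    apply: mulr_ge0; rewrite subr_ge0 ?wN //; apply: hs; rewrite hj0.
    by rewrite -ltnS (ltn_predK hj).
  rewrite -subr_ge0.
  have -> : mu (s j) * N * 0 + m0 * (w (s j) - N * 0) - mu (s j) * w (s j) =
            (m0 - mu (s j)) * w (s j) by ring.
  apply: mulr_ge0; rewrite ?subr_ge0 ?w0 //; apply: hs; rewrite hj0.
  by apply: leq_trans hj; apply: leq_pred.
apply: (le_trans (ler_sum _ (fun j _ => term j))).
have hc : forall F : 'I_(2 * d) -> C, \sum_j F j * c j = \sum_(c0 < d) F (mxtens_index (ord0, c0)).
  move=> F; rewrite sum_tens big_ord_recl big_ord_recl big_ord0 addr0.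
  rewrite [X in _ + X = _]big1 ?addr0; last first.
    by move=> c0 _; rewrite /c /= mul1n ltnNge leq_addr mulr0.
  by apply: eq_bigr => c0 _; rewrite /c /= ltn_ord mulr1.
have E : \sum_j (mu (s j) * N * c j + m0 * (w (s j) - N * c j)) =
   (\sum_j mu (s j) * c j) * N + m0 * (\sum_j w (s j) - N * \sum_j c j).
  rewrite mulr_suml mulr_sumr -sumrB mulr_sumr -big_split /=.
  by apply: eq_bigr => j _; ring.
have Ec : \sum_j c j = d%:R.
  rewrite (eq_bigr (fun j => 1 * c j)) => [|j _]; last by rewrite mul1r.
  by rewrite hc sumr_const card_ord.
rewrite E hc Ec.
have -> : \sum_j w (s j) = \sum_k w k by rewrite [RHS](reindex_inj (@perm_inj _ s)).
rewrite wsum.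
by rewrite [N * _]mulrC subrr mulr0 addr0.
Qed.

Lemma perm_adj (C : numClosedFieldType) n (s : 'S_n) :
  adjmx (perm_mx s : 'M[C]_n) = perm_mx s^-1.
Proof. by rewrite /adjmx tr_perm_mx map_perm_mx. Qed.

Lemma perm_unitary (C : numClosedFieldType) n (s : 'S_n) :
  (perm_mx s : 'M[C]_n) \is unitarymx.
Proof.
apply/unitarymxP; have := @perm_adj C n s; rewrite /adjmx => h.
by rewrite h -perm_mxM mulgV perm_mx1.
Qed.

Lemma perm_diag (C : numClosedFieldType) n (s : 'S_n) (m : 'rV[C]_n) :
  perm_mx s *m diag_mx m *m adjmx (perm_mx s) = diag_mx (\row_k m 0 (s k)).
Proof.
rewrite perm_adj -col_permE -row_permE; apply/matrixP => i j.
by rewrite !mxE (inj_eq perm_inj).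
Qed.

Lemma tens1 (C : numClosedFieldType) m n :
  (1%:M : 'M[C]_m) *t (1%:M : 'M[C]_n) = 1%:M.
Proof.
apply/matrixP => p q.
case: (mxtens_indexP p) => i b; case: (mxtens_indexP q) => j c.
by rewrite tensmxE !mxE idx_eq -natrM mulnb.
Qed.

Lemma tens_adj (C : numClosedFieldType) m n p q (A : 'M[C]_(m, n)) (B : 'M[C]_(p, q)) :
  adjmx (A *t B) = adjmx A *t adjmx B.
Proof. by apply/matrixP => i j; rewrite !mxE rmorphM. Qed.

Lemma tens_diag (C : numClosedFieldType) m n (a : 'rV[C]_m) (b : 'rV[C]_n) :
  diag_mx a *t diag_mx b =
  diag_mx (\row_k (a 0 (mxtens_unindex k).1 * b 0 (mxtens_unindex k).2)).
Proof.
apply/matrixP => p q.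
case: (mxtens_indexP p) => i b'; case: (mxtens_indexP q) => j c.
rewrite tensmxE !mxE idx_eq mxtens_indexK /=.
by case: (i == j); case: (b' == c); rewrite ?mulr0 ?mul0r ?mulr1n ?mulr0n ?andbF.
Qed.

Lemma tens_unitary (C : numClosedFieldType) m n (A : 'M[C]_m) (B : 'M[C]_n) :
  A \is unitarymx -> B \is unitarymx -> A *t B \is unitarymx.
Proof.
move=> /unitarymxP hA /unitarymxP hB; apply/unitarymxP.
have := @tens_adj C m m n n A B; rewrite /adjmx => ->.
by rewrite tensmx_mul hA hB tens1.
Qed.

Lemma ptrace_tens (C : numClosedFieldType) m n (A : 'M[C]_m) (B : 'M[C]_n)
  (f : 'I_(m * n) -> C) :
  B^t* *m B = 1%:M ->
  ptrace2 ((A *t B) *m diag_mx (\row_k f k) *m adjmx (A *t B)) =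
  A *m diag_mx (\row_a \sum_c f (mxtens_index (a, c))) *m adjmx A.
Proof.
move=> hB; apply/matrixP => i j.
rewrite /ptrace2 mxE.
transitivity (\sum_b \sum_a \sum_c
   A i a * B b c * f (mxtens_index (a, c)) * (A j a * B b c)^*).
  apply: eq_bigr => b _; rewrite mul_mx_diag mxE sum_tens.
  apply: eq_bigr => a _; apply: eq_bigr => c _.
  by rewrite !mxE !mxtens_indexK /=.
rewrite exchange_big /=.
rewrite mul_mx_diag mxE; apply: eq_bigr => a _.
rewrite exchange_big /= !mxE mulr_sumr mulr_suml; apply: eq_bigr => c _.
have hc : \sum_b B b c * (B b c)^* = 1.
  have := hB; move/matrixP/(_ c c); rewrite !mxE eqxx /= => h.
  by apply: (etrans _ h); apply: eq_bigr => b _; rewrite !mxE mulrC.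
transitivity (A i a * f (mxtens_index (a, c)) * (A j a)^* * \sum_b B b c * (B b c)^*).
  rewrite mulr_sumr; apply: eq_bigr => b _; rewrite rmorphM; ring.
by rewrite hc mulr1.
Qed.

Lemma tens_decomp (C : numClosedFieldType) m n (rT VT : 'M[C]_m) lT (rA VA : 'M[C]_n) lA :
  rT = VT *m diag_mx lT *m adjmx VT -> rA = VA *m diag_mx lA *m adjmx VA ->
  rT *t rA = (VT *t VA) *m
     diag_mx (\row_k (lT 0 (mxtens_unindex k).1 * lA 0 (mxtens_unindex k).2)) *m
     adjmx (VT *t VA).
Proof.
move=> -> ->; rewrite -!tensmx_mul tens_diag.
by rewrite tens_adj.
Qed.

Lemma eig_diag (C : numClosedFieldType) n (V : 'M[C]_n) (s : 'rV[C]_n) i :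
  V \is unitarymx -> eigenvalue (V *m diag_mx s *m adjmx V) (s 0 i).
Proof.
move=> hV; have VV := unitary_l hV. rewrite /adjmx in VV *.
apply/eigenvalueP; exists (delta_mx 0 i *m adjmx V).
  rewrite !mulmxA -(mulmxA _ (adjmx V) V) [adjmx V *m V]VV mulmx1.
  have -> : (delta_mx 0 i : 'rV[C]_n) *m diag_mx s = s 0 i *: delta_mx 0 i.
    by rewrite -rowE row_diag_mx.
  by rewrite -scalemxAl.
apply/eqP => h.
move: (congr1 (mulmx^~ V) h); rewrite /= mul0mx /adjmx -mulmxA VV mulmx1 => /matrixP/(_ 0 i); rewrite !mxE !eqxx /=.
by move/eqP; rewrite oner_eq0.
Qed.

Unset Implicit Arguments.

Theorem lemma1 (C : numClosedFieldType) (d : nat) (hd : (2 <= d)%N)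
  (rhoT : 'M[C]_2) (rhoA : 'M[C]_d) :
  is_density rhoT -> is_density rhoA ->
  exists (VT : 'M[C]_2) (lamT : 'rV[C]_2) (VA : 'M[C]_d) (lamA : 'rV[C]_d)
         (s : 'S_(2 * d)),
    is_eigenbasis rhoT VT lamT /\ is_eigenbasis rhoA VA lamA /\
    let W := VT *t VA in
    let U0 := W *m perm_mx s *m adjmx W in
    exists l0 : C,
      eigenvalue (purif_channel U0 (rhoT *t rhoA)) l0 /\
      (forall l, eigenvalue (purif_channel U0 (rhoT *t rhoA)) l -> l <= l0) /\
      (forall (U : 'M[C]_(2 * d)), unitaryP U ->
        forall l, eigenvalue (purif_channel U (rhoT *t rhoA)) l -> l <= l0).
Proof.
move=> hT hA.
have eT := eigbasis_of (let: And3 h _ _ := hT in h).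
have eA := eigbasis_of (let: And3 h _ _ := hA in h).
set VT := (spectralmx rhoT)^t* in eT *.
set lamT := spectral_diag rhoT in eT *.
set VA := (spectralmx rhoA)^t* in eA *.
set lamA := spectral_diag rhoA in eA *.
pose muf (k : 'I_(2 * d)) := lamT 0 (mxtens_unindex k).1 * lamA 0 (mxtens_unindex k).2.
have mu0 : forall k, 0 <= muf k.
  by move=> k; apply: mulr_ge0; [apply: (eig_ge0 hT eT) | apply: (eig_ge0 hA eA)].
have d0 : (0 < 2 * d)%N by rewrite muln_gt0 /= (leq_trans _ hd).
have dj : (d.-1 < 2 * d)%N.
  by rewrite (@leq_trans d) // ?ltn_predL ?(leq_trans _ hd) // leq_pmull.
have [sg hsg] := @sort_perm_exists C (2 * d) (Ordinal d0) muf (fun k => ger0_real (mu0 k)).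
exists VT, lamT, VA, lamA, sg; split; first exact: eT.
split; first exact: eA.
move=> W U0.
have Wu : W \is unitarymx by apply: tens_unitary; [case: eT | case: eA].
have hrho : rhoT *t rhoA = W *m diag_mx (\row_k muf k) *m adjmx W.
  by apply: tens_decomp; [case: eT | case: eA].
pose l0 := \sum_(c < d) muf (sg (mxtens_index (ord0, c))).
have bound : forall U : 'M[C]_(2 * d), unitaryP U ->
    forall l, eigenvalue (purif_channel U (rhoT *t rhoA)) l -> l <= l0.
  move=> U hU l; rewrite /purif_channel hrho.
  have -> : U *m (W *m diag_mx (\row_k muf k) *m adjmx W) *m adjmx U =
            (U *m W) *m diag_mx (\row_k muf k) *m (U *m W)^t*.
    by rewrite /adjmx trmx_mul map_mxM !mulmxA.
  apply: (key_bound (j0 := Ordinal dj)) => //.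
  exact: mul_unitarymx.
exists l0; split; last by split => //; apply: bound; rewrite /unitaryP /U0;
  rewrite !mul_unitarymx ?perm_unitary //; rewrite /adjmx trmxC_unitary.
rewrite /purif_channel hrho /U0 !adjmxM adjmxK !mulmxA.
rewrite /adjmx !mulmxKtV //.
have e := @perm_diag C (2 * d) sg (\row_k muf k); rewrite /adjmx in e.
have -> : W *m perm_mx sg *m diag_mx (\row_k muf k) *m (perm_mx sg)^t* *m W^t* =
    W *m (perm_mx sg *m diag_mx (\row_k muf k) *m (perm_mx sg)^t*) *m W^t*.
  by rewrite !mulmxA.
rewrite e.
have hVA : VA^t* *m VA = 1%:M by case: eA => /unitary_l.
have e2 : ptrace2 (W *m diag_mx (\row_k (\row_k0 muf k0) 0 (sg k)) *m W^t*) =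
   VT *m diag_mx (\row_a \sum_c (\row_k muf k) 0 (sg (mxtens_index (a, c)))) *m adjmx VT.
  exact: (@ptrace_tens C 2 d VT VA (fun k => (\row_k muf k) 0 (sg k)) hVA).
apply: (@eq_rect _ _ (fun M => eigenvalue M l0) _ _ (esym e2)).
have hVT : VT \is unitarymx by case: eT.
have h := @eig_diag C 2 VT (\row_a \sum_c (\row_k muf k) 0 (sg (mxtens_index (a, c)))) ord0 hVT.
have hl : (\row_a \sum_c (\row_k muf k) 0 (sg (mxtens_index (a, c)))) 0 ord0 = l0.
  by rewrite mxE; apply: eq_bigr => c _; rewrite !mxE.
by move: h; rewrite hl.
Qed.
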